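(* Let $n\geq2$ be finite, let $\mathfrak{A}\in TA_n$ be countable and let $X\subseteq A$ satisfy $\prod X=0$. Then there are a permutable set $V$ and an injective homomorphism $f:\mathfrak{A}\to\wp(V)$ such that $\bigcap_{x\in X}f(x)=\emptyset$.
   Context: $TA_n=\mathbf{Mod}(\Sigma_n)$, where $\Sigma_n$ consists of the Boolean algebra axioms, the equations saying each $s_{ij}$ ($i\neq j<n$) is a Boolean endomorphism, and $t_1(x)=t_2(x)$ for all words $t_1,t_2$ in the $s_{ij}$ whose associated compositions of transpositions $[i,j]$ coincide in $S_n$. A set $V\subseteq{}^nU$ is permutable if $s\circ[i,j]\in V$ whenever $s\in V$, $i\neq j<n$. $\wp(V)=\langle\mathcal P(V);\cap,-,S_{ij}\rangle$ with complement relative to $V$ and $S_{ij}(Y)=\{q\in V:q\circ[i,j]\in Y\}$. *)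

(* Defs.v *)
From HB Require Import structures.
From mathcomp Require Import all_boot all_order all_fingroup.
Set Implicit Arguments. Unset Strict Implicit. Unset Printing Implicit Defensive.
Import Order.TTheory.
Local Open Scope order_scope.

Definition word_ok (n : nat) (w : seq ('I_n * 'I_n)) : bool :=
  all (fun p => p.1 != p.2) w.

Definition eval_word (n : nat) (A : Type) (s : 'I_n -> 'I_n -> A -> A)
  (w : seq ('I_n * 'I_n)) (x : A) : A :=
  foldr (fun p y => s p.1 p.2 y) x w.

Definition perm_of_word (n : nat) (w : seq ('I_n * 'I_n)) : 'S_n :=
  foldr (fun p g => (tperm p.1 p.2 * g)%g) 1%g w.

(* A in TA_n: A is a Boolean algebra (complemented distributive lattice with
   top and bottom), each s_ij (i <> j) is a Boolean endomorphism, and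
   t1(x) = t2(x) whenever the words t1, t2 induce the same permutation. *)
Definition is_TA (n : nat) (d : Order.disp_t) (A : ctbDistrLatticeType d)
  (s : 'I_n -> 'I_n -> A -> A) : Prop :=
  (forall (i j : 'I_n), i != j -> forall x y : A, s i j (x `&` y) = s i j x `&` s i j y)
  /\ (forall (i j : 'I_n), i != j -> forall x : A, s i j (~` x) = ~` (s i j x))
  /\ (forall w1 w2 : seq ('I_n * 'I_n), word_ok w1 -> word_ok w2 ->
        perm_of_word w1 = perm_of_word w2 ->
        forall x : A, eval_word s w1 x = eval_word s w2 x).

Definition countable_type (A : Type) : Prop :=
  exists g : A -> nat, injective g.

(* prod X = 0 : the infimum of X exists and is the bottom element. *)
Definition inf_is_bot (d : Order.disp_t) (A : ctbDistrLatticeType d) (X : A -> Prop) : Prop :=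
  forall a : A, (forall x, X x -> a <= x) -> a = \bot.

Definition permutable (n : nat) (U : Type) (V : ('I_n -> U) -> Prop) : Prop :=
  forall q, V q -> forall (i j : 'I_n), i != j -> V (fun k => q (tperm i j k)).

(* f : A -> wp(V) is a homomorphism (subsets of V, preserving meet,
   complement relative to V, and S_ij). Sets are predicates, compared
   extensionally. *)
Definition hom_to_wp (n : nat) (d : Order.disp_t) (A : ctbDistrLatticeType d)
  (s : 'I_n -> 'I_n -> A -> A) (U : Type) (V : ('I_n -> U) -> Prop)
  (f : A -> ('I_n -> U) -> Prop) : Prop :=
  (forall a q, f a q -> V q)
  /\ (forall a b q, f (a `&` b) q <-> (f a q /\ f b q))
  /\ (forall a q, f (~` a) q <-> (V q /\ ~ f a q))
  /\ (forall (i j : 'I_n), i != j -> forall a q,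
        f (s i j a) q <-> (V q /\ f a (fun k => q (tperm i j k)))).

Definition injective_wp (n : nat) (A : Type) (U : Type) (f : A -> ('I_n -> U) -> Prop) : Prop :=
  forall a b, (forall q, f a q <-> f b q) -> a = b.

(* Main.v *)
Require Import Defs.
From HB Require Import structures.
From mathcomp Require Import all_boot all_order all_fingroup.
From Stdlib Require Import Classical ClassicalEpsilon.

Set Implicit Arguments. Unset Strict Implicit. Unset Printing Implicit Defensive.

Section Main.
Import Order.Theory.
Local Open Scope order_scope.

Variables (n : nat) (d : Order.disp_t) (A : ctbDistrLatticeType d)
  (s : 'I_n -> 'I_n -> A -> A).
Hypothesis hTA : is_TA s.

Lemma perm_of_word_cat (w1 w2 : seq ('I_n * 'I_n)) :
  perm_of_word (w1 ++ w2) = (perm_of_word w1 * perm_of_word w2)%g.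
Proof. elim: w1 => [|p w IH] /=; first by rewrite mul1g. by rewrite IH mulgA. Qed.

Lemma eval_word_cat w1 w2 x : eval_word s (w1 ++ w2) x = eval_word s w1 (eval_word s w2 x).
Proof. by rewrite /eval_word foldr_cat. Qed.

Lemma eval_cons p w x : eval_word s (p :: w) x = s p.1 p.2 (eval_word s w x).
Proof. by []. Qed.

Lemma word_ok_cons p (w : seq ('I_n * 'I_n)) : word_ok (p :: w) = (p.1 != p.2) && word_ok w.
Proof. by []. Qed.

Definition word_for (σ : 'S_n) : seq ('I_n * 'I_n) := s2val (prod_tpermP σ).

Lemma word_for_ok σ : word_ok (word_for σ).
Proof. rewrite /word_for; case: prod_tpermP => ts _ H /=. exact H. Qed.

Lemma word_for_perm σ : perm_of_word (word_for σ) = σ.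
Proof.
rewrite /word_for; case: prod_tpermP => ts E _ /=; rewrite [RHS]E; clear E.
elim: ts => [|p ts IH]; by rewrite ?big_nil ?big_cons //= IH.
Qed.

Definition t (σ : 'S_n) (c : A) := eval_word s (word_for σ^-1) c.

Lemma t_word σ w : word_ok w -> perm_of_word w = σ^-1%g -> forall c, t σ c = eval_word s w c.
Proof.
move=> ok pw c; apply: hTA.2.2 => //; [exact: word_for_ok | by rewrite word_for_perm pw].
Qed.

Lemma eval_meet w : word_ok w -> forall x y,
  eval_word s w (x `&` y) = eval_word s w x `&` eval_word s w y.
Proof.
elim: w => [|p w IH] // /andP[hp hw] x y. by rewrite !eval_cons IH // hTA.1.
Qed.

Lemma eval_compl w : word_ok w -> forall x, eval_word s w (~` x) = ~` eval_word s w x.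
Proof.
elim: w => [|p w IH] // /andP[hp hw] x. by rewrite !eval_cons IH // hTA.2.1.
Qed.

Lemma t_meet σ x y : t σ (x `&` y) = t σ x `&` t σ y.
Proof. exact: eval_meet (word_for_ok _) x y. Qed.

Lemma t_compl σ x : t σ (~` x) = ~` t σ x.
Proof. exact: eval_compl (word_for_ok _) x. Qed.

Lemma t_mono σ x y : x <= y -> t σ x <= t σ y.
Proof. move/meet_idPl => <-; rewrite t_meet; exact: leIr. Qed.

Lemma t_bot σ : t σ \bot = \bot.
Proof. by have := t_meet σ \bot (~` \bot); rewrite t_compl !meetxC. Qed.

Lemma t_one c : t 1%g c = c.
Proof. by rewrite (@t_word 1%g [::]) //= invg1. Qed.

Lemma t_comp σ c : t σ (t σ^-1 c) = c.
Proof.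
rewrite -[RHS]t_one (@t_word 1%g (word_for σ^-1 ++ word_for σ^-1^-1)).
- by rewrite eval_word_cat.
- by rewrite /word_ok all_cat; apply/andP; split; apply: word_for_ok.
- by rewrite perm_of_word_cat !word_for_perm invgK mulVg invg1.
Qed.

Lemma t_comp' σ c : t σ^-1 (t σ c) = c.
Proof. by rewrite -{2}(invgK σ) t_comp. Qed.

Lemma t_tperm (i j : 'I_n) σ c : i != j -> t (tperm i j * σ) c = t σ (s i j c).
Proof.
move=> hij.
rewrite (@t_word _ (word_for σ^-1 ++ [:: (i, j)])) ?eval_word_cat //.
- by rewrite /word_ok all_cat; apply/andP; split; [apply: word_for_ok | rewrite /= hij].
- by rewrite perm_of_word_cat word_for_perm /= mulg1 invMg tpermV.
Qed.

Variables (g : A -> nat) (hg : injective g).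

Definition enumA k : A := epsilon (inhabits \bot) (fun c => g c = k).

Lemma enumA_g c : enumA (g c) = c.
Proof.
apply: hg; exact: (epsilon_spec (inhabits \bot) (fun c' => g c' = g c) (ex_intro _ c erefl)).
Qed.

Fixpoint chain (b : A) (k : nat) : A :=
  match k with
  | 0 => b
  | k'.+1 => if chain b k' `&` enumA k' != \bot then chain b k' `&` enumA k'
             else chain b k' `&` ~` enumA k'
  end.

Lemma chain_nz b k : b != \bot -> chain b k != \bot.
Proof.
move=> nb; elim: k => //= k IH. case: ifP => // /negbFE H.
have Hle : chain b k <= ~` enumA k by rewrite -disj_leC.
by rewrite (meet_idPl Hle).
Qed.

Lemma chain_dec b k : chain b k.+1 <= chain b k.
Proof. by rewrite /=; case: ifP => _; exact: leIl. Qed.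

Lemma chain_mono b m k : (m <= k)%N -> chain b k <= chain b m.
Proof.
elim: k => [|k IH]; first by rewrite leqn0 => /eqP ->.
rewrite leq_eqVlt ltnS => /orP[/eqP -> //| H].
exact: le_trans (chain_dec b k) (IH H).
Qed.


Definition UF b c := exists k, chain b k <= c.

Lemma UF_meet b c c' : UF b (c `&` c') <-> UF b c /\ UF b c'.
Proof.
split.
- move=> [k H]; split; exists k; apply: (le_trans H); [exact: leIl | exact: leIr].
- move=> [[k1 H1] [k2 H2]]; exists (maxn k1 k2); rewrite lexI; apply/andP; split.
  + apply: (le_trans _ H1); apply: chain_mono; exact: leq_maxl.
  + apply: (le_trans _ H2); apply: chain_mono; exact: leq_maxr.
Qed.

Lemma UF_compl b c : b != \bot -> UF b (~` c) <-> ~ UF b c.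
Proof.
move=> nb; split.
- move=> H1 H2. have [k Hk] := proj2 (UF_meet b c (~` c)) (conj H2 H1).
  rewrite meetxC lex0 in Hk. by move: (chain_nz k nb); rewrite Hk.
- move=> H. exists (g c).+1 => /=. rewrite enumA_g. case: ifP => E; last exact: leIr.
  exfalso; apply: H; exists (g c).+1 => /=; rewrite enumA_g E; exact: leIr.
Qed.

Variables (X : A -> Prop) (hX : inf_is_bot X).

Definition pickX (b : A) (σ : 'S_n) : A :=
  epsilon (inhabits \bot) (fun x => X x /\ b `&` ~` t σ x != \bot).

Lemma pickX_spec b σ : b != \bot -> X (pickX b σ) /\ b `&` ~` t σ (pickX b σ) != \bot.
Proof.
move=> nb; apply: (epsilon_spec (inhabits \bot) (fun x => X x /\ b `&` ~` t σ x != \bot)). apply: NNPP => Hn.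
have Hall : forall x, X x -> b <= t σ x.
  move=> x Xx. have: b `&` ~` t σ x == \bot by apply/negPn/negP => H; apply: Hn; exists x.
  by rewrite disj_leC complK.
have H0 : t σ^-1 b = \bot.
  apply: hX => x Xx; rewrite -(t_comp' σ x); exact: t_mono (Hall x Xx).
by move: nb; rewrite -(t_comp σ b) H0 t_bot eqxx.
Qed.

Definition start_from (b : A) (l : seq 'S_n) :=
  foldr (fun σ c => c `&` ~` t σ (pickX c σ)) b l.

Lemma start_props b l : b != \bot ->
  [/\ start_from b l != \bot, start_from b l <= b &
   forall σ, σ \in l -> exists x, X x /\ start_from b l <= ~` t σ x].
Proof.
move=> nb; elim: l => [|σ l [IH1 IH2 IH3]] /=; first by split => //.
have [P1 P2] := pickX_spec σ IH1.
split => //; first exact: le_trans (leIl _ _) IH2.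
move=> τ; rewrite in_cons => /orP[/eqP -> | Hτ].
- exists (pickX (start_from b l) σ); split => //; exact: leIr.
- have [x [Xx Hx]] := IH3 τ Hτ; exists x; split => //; exact: le_trans (leIl _ _) Hx.
Qed.

Definition start (b : A) := start_from b (enum {perm 'I_n}).

Definition F (a : A) := UF (start a).

Variable k0 : 'I_n.

Definition U := (A * 'I_n)%type.
Definition V (q : 'I_n -> U) : Prop := exists a (σ : 'S_n), a != \bot /\ forall k, q k = (a, σ k).
Definition f (c : A) (q : 'I_n -> U) : Prop :=
  exists a (σ : 'S_n), a != \bot /\ (forall k, q k = (a, σ k)) /\ F a (t σ c).

Lemma uniq_pt (q : 'I_n -> U) a a' (σ σ' : 'S_n) :
  (forall k, q k = (a, σ k)) -> (forall k, q k = (a', σ' k)) -> a' = a /\ σ' = σ.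
Proof.
move=> H1 H2; have E k : (a, σ k) = (a', σ' k) by rewrite -H1 -H2.
split; first by case: (E k0).
by apply/permP => k; case: (E k).
Qed.

Lemma F_le a c : a != \bot -> a <= c -> F a c.
Proof.
move=> na ac; exists 0 => /=; have [_ H _] := start_props (enum {perm 'I_n}) na.
exact: le_trans H ac.
Qed.

Lemma Fnz a : a != \bot -> start a != \bot.
Proof. by move=> na; have [] := start_props (enum {perm 'I_n}) na. Qed.

Lemma sep c c' : c `&` ~` c' != \bot -> ~ (forall q, f c q <-> f c' q).
Proof.
move=> na H.
set a := c `&` ~` c'.
have Hq : forall k, (fun k => (a, (1%g : 'S_n) k)) k = (a, (1%g : 'S_n) k) by [].
have : f c (fun k => (a, (1%g : 'S_n) k)).
  exists a, 1%g; split => //; split => //; rewrite t_one; apply: F_le => //; exact: leIl.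
move/H => [a' [σ' [_ [Hq' HF]]]].
have [E1 E2] := uniq_pt Hq Hq'; subst a' σ'.
rewrite t_one in HF.
have HF2 : F a (~` c') by apply: F_le => //; exact: leIr.
by move/(UF_compl _ (Fnz na)): HF2.
Qed.

Lemma main :
  permutable V /\ hom_to_wp s V f /\ injective_wp f /\
    (forall q, ~ (V q /\ forall x, X x -> f x q)).
Proof.
split; [|split; [|split]].
- move=> q [a [σ [na Hq]]] i j hij; exists a, (tperm i j * σ)%g; split => // k.
  by rewrite Hq permM.
- split; [|split; [|split]].
  + by move=> c q [a [σ [na [Hq _]]]]; exists a, σ.
  + move=> c c' q; split.
    * move=> [a [σ [na [Hq HF]]]]; rewrite t_meet in HF; case/UF_meet: HF => H1 H2.
      by split; exists a, σ.
    * move=> [[a [σ [na [Hq H1]]]] [a' [σ' [_ [Hq' H2]]]]].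
      have [E1 E2] := uniq_pt Hq Hq'; subst a' σ'.
      exists a, σ; split => //; split => //; rewrite /F t_meet; exact/UF_meet.
  + move=> c q; split.
    * move=> [a [σ [na [Hq HF]]]]; split; first by exists a, σ.
      move=> [a' [σ' [_ [Hq' H2]]]]. have [E1 E2] := uniq_pt Hq Hq'; subst a' σ'.
      rewrite t_compl in HF. by move/(UF_compl _ (Fnz na)): HF.
    * move=> [[a [σ [na Hq]]] Hn]; exists a, σ; split => //; split => //.
      rewrite /F t_compl; apply/(UF_compl _ (Fnz na)) => H; apply: Hn; exists a, σ; split => //.
  + move=> i j hij c q; split.
    * move=> [a [σ [na [Hq HF]]]]; split; first by exists a, σ.
      exists a, (tperm i j * σ)%g; split => //; split; first by move=> k; rewrite Hq permM.
      by rewrite t_tperm.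
    * move=> [[a [σ [na Hq]]] [a' [σ' [na' [Hq' HF]]]]].
      have Hq2 : forall k, (fun k => q (tperm i j k)) k = (a, (tperm i j * σ)%g k).
        by move=> k /=; rewrite Hq permM.
      have [E1 E2] := uniq_pt Hq2 Hq'; subst a' σ'.
      exists a, σ; split => //; split => //; by rewrite -t_tperm.
- move=> c c' H.
  case: (boolP (c `&` ~` c' == \bot)) => E1; last by exfalso; exact: sep E1 H.
  case: (boolP (c' `&` ~` c == \bot)) => E2; last first.
    by exfalso; apply: (sep E2) => q; split => /H.
  rewrite disj_leC complK in E1; rewrite disj_leC complK in E2.
  by apply/le_anti; rewrite E1 E2.
- move=> q [[a [σ [na Hq]]] Hall].
  have [_ _ H3] := start_props (enum {perm 'I_n}) na.
  have [x [Xx Hx]] := H3 σ (mem_enum _ _).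
  have [a' [σ' [_ [Hq' HF]]]] := Hall x Xx.
  have [E1 E2] := uniq_pt Hq Hq'; subst a' σ'.
  have HF2 : F a (~` t σ x) by exists 0.
  by move/(UF_compl _ (Fnz na)): HF2.
Qed.

End Main.

Theorem corollary3p20 (n : nat) (hn : 2 <= n) (d : Order.disp_t)
  (A : ctbDistrLatticeType d) (s : 'I_n -> 'I_n -> A -> A)
  (hTA : is_TA s) (hcount : countable_type A)
  (X : A -> Prop) (hX : inf_is_bot X) :
  exists (U : Type) (V : ('I_n -> U) -> Prop) (f : A -> ('I_n -> U) -> Prop),
    permutable V /\ hom_to_wp s V f /\ injective_wp f /\
    (forall q, ~ (V q /\ forall x, X x -> f x q)).
Proof.
have [g hg] := hcount.
have k0 : 'I_n := Ordinal (ltnW hn).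
exists (@U n d A), (@V n d A), (@f n d A s g X).
exact: (main hTA hg hX k0).
Qed.
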